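(* Let $r\le s$, $M$ the space of complex $r\times s$ matrices, and $\lambda$ a pre-partition of length at most $r$ with associated orbit $O_\lambda\subset M_\infty$. If $\lambda$ is a partition, then $O_\lambda$ is a cylinder of $M_\infty$. More generally, if $r-k$ is the number of infinite terms of $\lambda$, then $O_\lambda$ is a cylinder of $(D_k)_\infty$, where $D_k\subset M$ is the variety of matrices of rank at most $k$.
   Context: For a variety $X$, a constructible subset is a finite union of locally closed subsets, and a cylinder in the arc space $X_\infty$ is a set $\psi_n^{-1}(C)$ with $C\subset X_n$ constructible, where $\psi_n:X_\infty\to X_n$ is the truncation to the $n$-th jet scheme. The $\mathbb{C}$-points of $M_\infty$ are $r\times s$ matrices over $\mathbb{C}[[t]]$, acted on by $G_\infty$ for $G=GL_r\times GL_s$ via $(g,h)\cdot A=gAh^{-1}$. A pre-partition of length at most $r$ is $\lambda_1\ge\dots\ge\lambda_r\ge0$ in $\mathbb N\cup\{\infty\}$ ($\infty>n$); a partition if all terms finite. $\delta_\lambda$ is the $r\times s$ matrix with first $s-r$ columns zero and last $r$ columns $\mathrm{diag}(t^{\lambda_1},\dots,t^{\lambda_r})$ ($t^\infty=0$), and $O_\lambda=G_\infty\cdot\delta_\lambda$. $D_k$ is defined by the $(k+1)\times(k+1)$ minors. *)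

(* Defs.v *)
From HB Require Import structures.
From mathcomp Require Import all_boot all_order all_algebra.
From mathcomp Require Import reals.
From mathcomp Require Import complex.
From mathcomp Require mpoly.

Set Implicit Arguments.
Unset Strict Implicit.
Unset Printing Implicit Defensive.

Import Order.TTheory GRing.Theory Num.Theory.
Local Open Scope ring_scope.

Section Defs.
Variable R : realType.
Local Notation C := (complex R).

Definition zero_locus (N : nat) (P : mpoly.mpoly N C -> Prop) : ('I_N -> C) -> Prop :=
  fun x => forall p, P p -> mpoly.meval x p = 0.

Definition locally_closed (N : nat) (S : ('I_N -> C) -> Prop) : Prop :=
  exists P Q : mpoly.mpoly N C -> Prop,
    forall x, S x <-> (zero_locus P x /\ ~ zero_locus Q x).

Definition constructible (N : nat) (S : ('I_N -> C) -> Prop) : Prop :=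
  exists (m : nat) (L : 'I_m -> ('I_N -> C) -> Prop),
    (forall i, locally_closed (L i)) /\ (forall x, S x <-> exists i, L i x).

(* an arc of M: an r x s matrix over C[[t]]; A i j l = coefficient of t^l *)
Definition arcM (r s : nat) := 'I_r -> 'I_s -> nat -> C.

(* an n-jet of M: an r x s matrix over C[t]/(t^(n+1)) *)
Definition jetM (r s n : nat) := 'I_r -> 'I_s -> 'I_n.+1 -> C.

Definition psi (r s n : nat) (A : arcM r s) : jetM r s n :=
  fun i j m => A i j (nat_of_ord m).
Arguments psi {r s} n A.

(* the jet space M_n is the affine space C^(r s (n+1)); its coordinates *)
Definition jet_coords (r s n : nat) (x : 'I_#|{: 'I_r * 'I_s * 'I_n.+1}| -> C)
  : jetM r s n := fun i j m => x (enum_rank (i, j, m)).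

Definition constructible_jet (r s n : nat) (S : jetM r s n -> Prop) : Prop :=
  constructible (fun x => S (jet_coords x)).

Definition jet_polymx (r s n : nat) (J : jetM r s n) : 'M[{poly C}]_(r, s) :=
  \matrix_(i, j) \poly_(m < n.+1) J i j (inord m).

(* J in (D_k)_n : all (k+1)x(k+1) minors vanish in C[t]/(t^(n+1)) *)
Definition jet_in_D (r s n k : nat) (J : jetM r s n) : Prop :=
  forall (f : 'I_k.+1 -> 'I_r) (g : 'I_k.+1 -> 'I_s),
    injective f -> injective g ->
    ('X^(n.+1) %| \det (\matrix_(a, b) jet_polymx J (f a) (g b)))%R.

(* A in (D_k)_oo = projective limit of the (D_k)_n *)
Definition arc_in_D (r s k : nat) (A : arcM r s) : Prop :=
  forall n, jet_in_D k (psi n A).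

Definition cylinder_M (r s : nat) (X : arcM r s -> Prop) : Prop :=
  exists (n : nat) (S : jetM r s n -> Prop),
    constructible_jet S /\ forall A, X A <-> S (psi n A).

Definition cylinder_D (r s k : nat) (X : arcM r s -> Prop) : Prop :=
  exists (n : nat) (S : jetM r s n -> Prop),
    constructible_jet S /\ (forall J, S J -> jet_in_D k J) /\
    forall A, X A <-> (arc_in_D k A /\ S (psi n A)).

Definition psmx_mul (m n p : nat) (A : 'I_m -> 'I_n -> nat -> C)
  (B : 'I_n -> 'I_p -> nat -> C) : 'I_m -> 'I_p -> nat -> C :=
  fun i j l => \sum_(k < n) \sum_(a < l.+1) A i k a * B k j (l - a)%N.

Definition psmx_id (n : nat) : 'I_n -> 'I_n -> nat -> C :=
  fun i j l => if (i == j) && (l == 0%N) then 1 else 0.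
Arguments psmx_id : clear implicits.

(* None stands for infinity *)
Definition le_ext (a b : option nat) : bool :=
  match a, b with
  | _, None => true
  | None, Some _ => false
  | Some x, Some y => (x <= y)%N
  end.

(* lambda_1 >= ... >= lambda_r >= 0 in N u {oo} (indices shifted to 0..r-1) *)
Definition prepartition (r : nat) (lam : 'I_r -> option nat) : Prop :=
  forall i j : 'I_r, (i <= j)%N -> le_ext (lam j) (lam i).

Definition is_partition (r : nat) (lam : 'I_r -> option nat) : Prop :=
  forall i, lam i <> None.

(* t^m, with t^oo = 0 *)
Definition tpow (a : option nat) : nat -> C :=
  fun l => match a with Some m => if l == m then 1 else 0 | None => 0 end.

(* first s-r columns zero, last r columns diag(t^lam_1, ..., t^lam_r) *)
Definition delta (r s : nat) (lam : 'I_r -> option nat) : arcM r s :=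
  fun i j l => if nat_of_ord j == (s - r + i)%N then tpow (lam i) l else 0.
Arguments delta {r} s lam.

(* O_lambda = G_oo . delta_lambda, (g,h).A = g A h^{-1} *)
Definition O_lam (r s : nat) (lam : 'I_r -> option nat) : arcM r s -> Prop :=
  fun A => exists (g g' : 'I_r -> 'I_r -> nat -> C) (h h' : 'I_s -> 'I_s -> nat -> C),
    psmx_mul g g' = psmx_id r /\ psmx_mul g' g = psmx_id r /\
    psmx_mul h h' = psmx_id s /\ psmx_mul h' h = psmx_id s /\
    A = psmx_mul (psmx_mul g (delta s lam)) h'.

End Defs.
Arguments O_lam R {r} s lam.
Arguments cylinder_D {R r s} k X.

(* Main.v *)
Require Import Defs.
From HB Require Import structures.
From mathcomp Require Import all_boot all_order all_algebra.
From mathcomp Require Import reals complex.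
From mathcomp Require Import closed_field perm.
From mathcomp Require mpoly.
From Stdlib Require Import FunctionalExtensionality.

Module Helpers.
Set Implicit Arguments. Unset Strict Implicit. Unset Printing Implicit Defensive.
Import GRing.Theory.
Local Open Scope ring_scope.

Module PA.
Import mpoly.

Section PartA.
Variable R : realType.
Local Notation C := (complex R).
Variable N : nat.

Fixpoint tmp (t : GRing.term C) : mpoly.mpoly N C :=
  match t with
  | GRing.Var i => if insub i is Some j then mpoly.mpolyX C (mpoly.mnm1 j) else mpoly.mpolyC N 0
  | GRing.Const c => mpoly.mpolyC N c
  | GRing.NatConst n => mpoly.mpolyC N n%:R
  | GRing.Add a b => tmp a + tmp b
  | GRing.Opp a => - tmp a
  | GRing.NatMul a n => tmp a *+ n
  | GRing.Mul a b => tmp a * tmp b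
  | GRing.Inv a => mpoly.mpolyC N 0
  | GRing.Exp a n => tmp a ^+ n
  end.

Definition envN (x : 'I_N -> C) : seq C := [seq x i | i <- enum 'I_N].

Lemma size_envN x : size (envN x) = N.
Proof. by rewrite size_map size_enum_ord. Qed.

Lemma nth_envN x i : nth 0 (envN x) i = if insub i is Some j then x j else 0.
Proof.
case: insubP => [j lt <- | ge].
  rewrite (nth_map j) ?size_enum_ord ?ltn_ord //.
  by have -> : \val j = nat_of_ord j by []; rewrite nth_ord_enum.
by apply: nth_default; rewrite size_envN leqNgt.
Qed.

Lemma meval_exp (x : 'I_N -> C) (p : mpoly.mpoly N C) n :
  mpoly.meval x (p ^+ n) = mpoly.meval x p ^+ n.
Proof.
elim: n => [|n IH]; first by rewrite !expr0 mpoly.meval1.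
by rewrite !exprS mpoly.mevalM IH.
Qed.

Lemma eval_tm x t : GRing.rterm t -> GRing.eval (envN x) t = mpoly.meval x (tmp t).
Proof.
elim: t => /=.
- by move=> i _; rewrite nth_envN; case: insubP => [j _ _|_];
    [rewrite mpoly.mevalXU | rewrite mpoly.meval0].
- by move=> c _; rewrite mpoly.mevalC.
- by move=> n _; rewrite mpoly.mevalC.
- by move=> a IHa b IHb /andP[ra rb]; rewrite mpoly.mevalD IHa ?IHb.
- by move=> a IHa ra; rewrite mpoly.mevalN IHa.
- by move=> a IHa n ra; rewrite mpoly.mevalMn IHa.
- by move=> a IHa b IHb /andP[ra rb]; rewrite mpoly.mevalM IHa ?IHb.
- by [].
- by move=> a IHa n ra; rewrite meval_exp IHa.
Qed.

Definition clause (bc : seq (GRing.term C) * seq (GRing.term C)) (x : 'I_N -> C) :=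
  all (fun t => GRing.eval (envN x) t == 0) bc.1 &&
  all (fun t => GRing.eval (envN x) t != 0) bc.2.

Lemma constructible_ext (S1 S2 : ('I_N -> C) -> Prop) :
  (forall x, S1 x <-> S2 x) -> constructible S1 -> constructible S2.
Proof.
move=> e [m [L [HL HS]]]; exists m, L; split => // x.
by rewrite -e.
Qed.

Lemma zl_pos (ps : seq (GRing.term C)) (x : 'I_N -> C) : all (@GRing.rterm _) ps ->
  (zero_locus (fun p => has (fun t => tmp t == p) ps) x <->
   all (fun t => GRing.eval (envN x) t == 0) ps).
Proof.
rewrite /zero_locus; elim: ps => [|t ps IH] /=; first by split.
case/andP => rt rps; split.
  move=> h; rewrite eval_tm // h ?eqxx //=; apply/(IH rps).
  by move=> p hp; apply: h; rewrite hp orbT.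
case/andP => /eqP e0 /(IH rps) h p /orP[/eqP <-|hp]; last exact: h.
by rewrite -eval_tm.
Qed.

Lemma meval_prod (x : 'I_N -> C) (qs : seq (GRing.term C)) :
  mpoly.meval x (\prod_(t <- qs) tmp t) = \prod_(t <- qs) mpoly.meval x (tmp t).
Proof.
elim: qs => [|q qs IH]; first by rewrite !big_nil mpoly.meval1.
by rewrite !big_cons mpoly.mevalM IH.
Qed.

Lemma clause_lc bc : GRing.dnf_rterm bc -> locally_closed (clause bc).
Proof.
case: bc => ps qs /andP[/= rps rqs].
exists (fun p => has (fun t => tmp t == p) ps).
exists (fun p => p = \prod_(t <- qs) tmp t) => x.
rewrite /clause /=; have Hz := zl_pos x rps.
have -> : all (fun t => GRing.eval (envN x) t != 0) qs =
          (mpoly.meval x (\prod_(t <- qs) tmp t) != 0).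
  rewrite meval_prod prodf_seq_neq0.
  by elim: qs rqs => //= q qs IH /andP[rq rqs]; rewrite IH // eval_tm.
split.
  case/andP => hp hq; split; first by apply/Hz.
  by move=> hz; move/negP: hq; apply; apply/eqP; exact: hz _ erefl.
case=> /Hz -> h; apply/negP => /eqP hz; apply: h => p ->; exact: hz.
Qed.

Lemma constructible_dnf bcs : all (@GRing.dnf_rterm _) bcs ->
  constructible (fun x => has (clause^~ x) bcs).
Proof.
move=> rb; exists (size bcs), (fun i => clause (nth ([::], [::]) bcs i)).
split; first by move=> i; apply: clause_lc; apply: (all_nthP _ rb).
move=> x; split.
  by case/(has_nthP ([::], [::])) => i ib cl; exists (Ordinal ib).
by case=> i cl; apply/(has_nthP ([::], [::])); exists i.
Qed.

Lemma qf_eval_dnf (e : seq C) bcs : GRing.qf_eval e (GRing.dnf_to_form bcs) =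
  has (fun bc => all (fun t => GRing.eval e t == 0) bc.1 &&
                 all (fun t => GRing.eval e t != 0) bc.2) bcs.
Proof.
elim: bcs => [|[ps qs] bcs IH] //=; rewrite IH; congr (_ || _).
congr (_ && _).
  by elim: ps => //= p ps ->.
by elim: qs => //= q qs ->.
Qed.

Definition eqs_form (ts : seq (GRing.term C)) : GRing.formula C :=
  foldr (fun t f => GRing.And (GRing.Equal t (GRing.Const 0)) f) GRing.True ts.

Lemma holds_eqs (e : seq C) (ts : seq (GRing.term C)) : GRing.holds e (eqs_form ts) <->
  all (fun t => GRing.eval e t == 0) ts.
Proof.
elim: ts => [|t ts IH] //=; split.
  by case=> /eqP -> /IH ->.
by case/andP=> /eqP -> /IH.
Qed.

Lemma holds_exs M (body : GRing.formula C) (e : seq C) :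
  GRing.holds e (foldr (fun i f => GRing.Exists i f) body (iota (size e) M)) <->
  exists ys, size ys = M /\ GRing.holds (e ++ ys) body.
Proof.
elim: M e => [|M IH] e /=.
  split; first by move=> h; exists [::]; rewrite cats0.
  by case=> ys [/size0nil -> ]; rewrite cats0.
have sn x : set_nth 0 e (size e) x = rcons e x.
  by elim: e {IH} => //= a e ->.
split.
  case=> x; rewrite sn -(size_rcons e x) IH => -[ys [sz h]].
  by exists (x :: ys); rewrite /= sz -cat_rcons.
case=> [[|x ys] [//= [sz] h]]; exists x; rewrite sn -(size_rcons e x) IH.
by exists ys; rewrite cat_rcons.
Qed.

Lemma rform_eqs (ts : seq (GRing.term C)) : all (@GRing.rterm _) ts -> GRing.rformula (eqs_form ts).
Proof. by elim: ts => //= t ts IH /andP[-> /IH ->]. Qed.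

Lemma rform_exs M (body : GRing.formula C) n : GRing.rformula body ->
  GRing.rformula (foldr (fun i f => GRing.Exists i f) body (iota n M)).
Proof. by elim: M n => //= M IH n /IH. Qed.

Lemma proj_constructible M (ts : seq (GRing.term C)) : all (@GRing.rterm _) ts ->
  constructible (fun x : 'I_N -> C => exists ys : seq C, size ys = M /\
     all (fun t => GRing.eval (envN x ++ ys) t == 0) ts).
Proof.
move=> rts.
pose f := foldr (fun i f => GRing.Exists i f) (eqs_form ts) (iota N M).
have rf : GRing.rformula f by apply: rform_exs; apply: rform_eqs.
pose qf := GRing.quantifier_elim (@ClosedFieldQE.ex_elim C) f.
have wf := GRing.quantifier_elim_wf (@ClosedFieldQE.wf_ex_elim C) rf.
have Hqf := GRing.quantifier_elim_rformP (@ClosedFieldQE.wf_ex_elim C)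
   (ClosedFieldQE.holds_ex_elim (@complex_acf_axiom R)) _ rf.
apply: (@constructible_ext (fun x => has (clause^~ x) (GRing.qf_to_dnf qf false))).
  move=> x; rewrite (_ : has _ _ = GRing.qf_eval (envN x) qf); last first.
    by rewrite -(GRing.qf_to_dnfP _ wf) qf_eval_dnf.
  split.
    move/Hqf; rewrite /f -(size_envN x) holds_exs => -[ys [sz h]].
    by exists ys; split => //; apply/holds_eqs.
  case=> ys [sz h]; apply/Hqf; rewrite /f -(size_envN x) holds_exs.
  by exists ys; split => //; apply/holds_eqs.
apply: constructible_dnf; apply: GRing.qf_to_dnf_rterm.
by case/andP: wf.
Qed.

End PartA.

End PA.
Import PA.

Section PartB.
Variable R : realType.
Local Notation C := (complex R).
Local Notation ps m n := ('I_m -> 'I_n -> nat -> C).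

Definition PL (L m n : nat) (A : ps m n) : 'M[{poly C}]_(m, n) :=
  \matrix_(i, j) \poly_(l < L) A i j l.

Definition eqp (l : nat) (p q : {poly C}) := forall q', (q' <= l)%N -> p`_q' = q`_q'.
Definition eqmod (l m n : nat) (X Y : 'M[{poly C}]_(m, n)) :=
  forall i j, eqp l (X i j) (Y i j).

Lemma eqp_refl l p : eqp l p p. Proof. by []. Qed.
Lemma eqp_sym l p q : eqp l p q -> eqp l q p.
Proof. by move=> h i hi; rewrite h. Qed.
Lemma eqp_trans l p q u : eqp l p q -> eqp l q u -> eqp l p u.
Proof. by move=> h1 h2 i hi; rewrite h1 ?h2. Qed.
Lemma eqpD l p p' q q' : eqp l p p' -> eqp l q q' -> eqp l (p + q) (p' + q').
Proof. by move=> hp hq i hi; rewrite !coefD hp ?hq. Qed.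
Lemma eqpM l p p' q q' : eqp l p p' -> eqp l q q' -> eqp l (p * q) (p' * q').
Proof.
move=> hp hq i hi; rewrite !coefM; apply: eq_bigr => a _.
have ha : (a <= l)%N by apply: leq_trans hi; rewrite -ltnS.
by rewrite hp // hq // (leq_trans (leq_subr _ _) hi).
Qed.
Lemma eqpZ l c p p' : eqp l p p' -> eqp l (c *: p) (c *: p').
Proof. by move=> hp i hi; rewrite !coefZ hp. Qed.

Lemma eqp_sum l (I : Type) (s : seq I) (P : pred I) (F G : I -> {poly C}) :
  (forall i, P i -> eqp l (F i) (G i)) ->
  eqp l (\sum_(i <- s | P i) F i) (\sum_(i <- s | P i) G i).
Proof.
move=> h; apply: (big_ind2 (fun a b => eqp l a b)) => //.
by move=> x1 x2 y1 y2; apply: eqpD.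
Qed.

Lemma eqp_prod l (I : Type) (s : seq I) (P : pred I) (F G : I -> {poly C}) :
  (forall i, P i -> eqp l (F i) (G i)) ->
  eqp l (\prod_(i <- s | P i) F i) (\prod_(i <- s | P i) G i).
Proof.
move=> h; apply: (big_ind2 (fun a b => eqp l a b)) => //.
by move=> x1 x2 y1 y2; apply: eqpM.
Qed.

Lemma eqmod_refl l m n (X : 'M_(m, n)) : eqmod l X X. Proof. by []. Qed.
Lemma eqmod_sym l m n (X Y : 'M_(m, n)) : eqmod l X Y -> eqmod l Y X.
Proof. by move=> h i j; apply: eqp_sym. Qed.
Lemma eqmod_trans l m n (X Y Z : 'M_(m, n)) : eqmod l X Y -> eqmod l Y Z -> eqmod l X Z.
Proof. by move=> h1 h2 i j; apply: eqp_trans (h1 i j) (h2 i j). Qed.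

Lemma eqmod_mul l m n p (X X' : 'M_(m, n)) (Y Y' : 'M_(n, p)) :
  eqmod l X X' -> eqmod l Y Y' -> eqmod l (X *m Y) (X' *m Y').
Proof.
move=> hX hY i j; rewrite !mxE; apply: eqp_sum => k _; exact: eqpM.
Qed.

Lemma coef_PL L m n (A : ps m n) i j q :
  (PL L A i j)`_q = if (q < L)%N then A i j q else 0.
Proof. by rewrite mxE coef_poly. Qed.

Lemma mul_PL L m n p (A : ps m n) (B : ps n p) i j l : (l < L)%N ->
  psmx_mul A B i j l = ((PL L A *m PL L B) i j)`_l.
Proof.
move=> lL; rewrite mxE coef_sum /psmx_mul; apply: eq_bigr => k _.
rewrite coefM; apply: eq_bigr => a _; rewrite !coef_PL.
have ha : (a < L)%N by apply: leq_ltn_trans lL; rewrite -ltnS.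
by rewrite ha (leq_ltn_trans (leq_subr _ _) lL).
Qed.

Lemma PL_mul L m n p (A : ps m n) (B : ps n p) l : (l < L)%N ->
  eqmod l (PL L (psmx_mul A B)) (PL L A *m PL L B).
Proof.
move=> lL i j q hq; rewrite coef_PL (leq_ltn_trans hq lL); apply: mul_PL.
exact: leq_ltn_trans hq lL.
Qed.

Lemma eqmod_PL l L L' m n (A : ps m n) : (l < L)%N -> (l < L')%N ->
  eqmod l (PL L A) (PL L' A).
Proof.
by move=> h h' i j q hq; rewrite !coef_PL (leq_ltn_trans hq h) (leq_ltn_trans hq h').
Qed.

Lemma psmx_mulA m n p q (A : ps m n) (B : ps n p) (D : ps p q) :
  psmx_mul (psmx_mul A B) D = psmx_mul A (psmx_mul B D).
Proof.
apply: functional_extensionality => i; apply: functional_extensionality => j.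
apply: functional_extensionality => l.
rewrite [LHS](mul_PL (L:=l.+1)) // [RHS](mul_PL (L:=l.+1)) //.
have e1 := eqmod_mul (PL_mul A B (ltnSn l)) (eqmod_refl (l:=l) (PL l.+1 D)).
have e2 := eqmod_mul (eqmod_refl (l:=l) (PL l.+1 A)) (PL_mul B D (ltnSn l)).
by rewrite e1 // e2 // mulmxA.
Qed.

Lemma PL_id L n : (0 < L)%N -> PL L (@psmx_id R n) = 1%:M.
Proof.
move=> L0; apply/matrixP => i j; rewrite !mxE; apply/polyP => q.
rewrite coef_poly /psmx_id.
case: (i == j); rewrite /= ?(mulr1n, mulr0n) ?coef1 ?coef0; last by case: ifP.
by case: q => [|q] /=; rewrite ?L0 //; case: ifP.
Qed.

Lemma psmx_mul1 m n (A : ps m n) : psmx_mul (@psmx_id R m) A = A.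
Proof.
apply: functional_extensionality => i; apply: functional_extensionality => j.
apply: functional_extensionality => l.
by rewrite (mul_PL (L:=l.+1)) // PL_id // mul1mx coef_PL ltnSn.
Qed.

Lemma psmx_mulr1 m n (A : ps m n) : psmx_mul A (@psmx_id R n) = A.
Proof.
apply: functional_extensionality => i; apply: functional_extensionality => j.
apply: functional_extensionality => l.
by rewrite (mul_PL (L:=l.+1)) // PL_id // mulmx1 coef_PL ltnSn.
Qed.

Definition agree (N m n : nat) (A B : ps m n) :=
  forall i j l, (l <= N)%N -> A i j l = B i j l.

Lemma agree_mull N m n p (A A' : ps m n) (B : ps n p) :
  agree N A A' -> agree N (psmx_mul A B) (psmx_mul A' B).
Proof.
move=> h i j l hl; apply: eq_bigr => k _; apply: eq_bigr => a _.
by rewrite h // (leq_trans _ hl) // -ltnS.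
Qed.

Lemma agree_mulr N m n p (A : ps m n) (B B' : ps n p) :
  agree N B B' -> agree N (psmx_mul A B) (psmx_mul A B').
Proof.
move=> h i j l hl; apply: eq_bigr => k _; apply: eq_bigr => a _.
by rewrite h // (leq_trans (leq_subr _ _) hl).
Qed.

Lemma agree_refl N m n (A : ps m n) : agree N A A. Proof. by []. Qed.
Lemma agree_sym N m n (A B : ps m n) : agree N A B -> agree N B A.
Proof. by move=> h i j l hl; rewrite h. Qed.
Lemma agree_trans N m n (A B D : ps m n) : agree N A B -> agree N B D -> agree N A D.
Proof. by move=> h1 h2 i j l hl; rewrite h1 ?h2. Qed.

Definition co m n (A : ps m n) l : 'M[C]_(m, n) := \matrix_(i, j) A i j l.

Lemma co_mul m n p (A : ps m n) (B : ps n p) l :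
  co (psmx_mul A B) l = \sum_(a < l.+1) co A a *m co B (l - a).
Proof.
apply/matrixP => i j; rewrite !mxE summxE /psmx_mul exchange_big.
by apply: eq_bigr => a _; rewrite mxE; apply: eq_bigr => k _; rewrite !mxE.
Qed.

Lemma co_id n l : co (@psmx_id R n) l = if l == 0%N then 1%:M else 0.
Proof.
apply/matrixP => i j; rewrite !mxE /psmx_id.
case: l => [|l]; rewrite !mxE ?andbT ?andbF //.
by case: (i == j).
Qed.

Lemma co_ext m n (A B : ps m n) : (forall l, co A l = co B l) -> A = B.
Proof.
move=> h; apply: functional_extensionality => i; apply: functional_extensionality => j.
apply: functional_extensionality => l.
by have /matrixP /(_ i j) := h l; rewrite !mxE.
Qed.

Lemma negsum0 (m k : nat) (F G : 'I_k -> 'M[C]_m) :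
  (forall a, F a = G a) -> - (\sum_a F a) + \sum_a G a = 0.
Proof. by move=> h; rewrite (eq_bigr _ (fun a _ => h a)) addNr. Qed.

Section Inv.
Variables (n : nat) (X : ps n n).
Let X0i := invmx (co X 0).

Fixpoint Yup (l : nat) : nat -> 'M[C]_n :=
  match l with
  | 0 => fun _ => X0i
  | l'.+1 => fun m => if m == l'.+1 then
       - (X0i *m \sum_(a < l'.+1) co X a.+1 *m Yup l' (l' - a))
     else Yup l' m
  end.

Let Ym m := Yup m m.

Lemma Yup_stable l m : (m <= l)%N -> Yup l m = Ym m.
Proof.
elim: l m => [|l IH] m; first by rewrite leqn0 => /eqP ->.
rewrite leq_eqVlt => /orP[/eqP ->|]; first by [].
rewrite ltnS => hm /=; rewrite ifN_eq ?IH //.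
by apply: contraTneq hm => ->; rewrite ltnn.
Qed.

Lemma YmS l : Ym l.+1 = - (X0i *m \sum_(a < l.+1) co X a.+1 *m Ym (l - a)).
Proof.
rewrite /Ym /= eqxx; congr (- (_ *m _)); apply: eq_bigr => a _.
by rewrite Yup_stable // leq_subr.
Qed.

Definition Yps : ps n n := fun i j l => Ym l i j.

Lemma co_Yps l : co Yps l = Ym l.
Proof. by apply/matrixP => i j; rewrite mxE. Qed.

Lemma mulY : co X 0 \in unitmx -> psmx_mul X Yps = @psmx_id R n.
Proof.
move=> U; apply: co_ext => l; rewrite co_mul co_id big_ord_recl subn0 co_Yps.
case: l => [|l].
  by rewrite big_ord0 addr0 /Ym /= (mulmxV U).
rewrite YmS mulmxN mulmxA (mulmxV U) mul1mx.
apply: negsum0 => a.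
have e2 : nat_of_ord (lift ord0 a) = a.+1 by rewrite /= /bump leq0n add1n.
by rewrite co_Yps e2 subSS.
Qed.

Lemma co_Yps0 : co Yps 0 = X0i.
Proof. by rewrite co_Yps. Qed.

End Inv.

Lemma inv_exists n (X : ps n n) : co X 0 \in unitmx ->
  exists Y, psmx_mul X Y = @psmx_id R n /\ psmx_mul Y X = @psmx_id R n.
Proof.
move=> U; have hY := mulY U.
have UY : co (Yps X) 0 \in unitmx by rewrite co_Yps0 unitmx_inv.
move: (Yps X) hY UY => Y hY UY.
have hW := mulY UY; move: (Yps Y) hW => W hW.
exists Y; split => //.
have e : X = W by rewrite -{1}[X]psmx_mulr1 -hW -psmx_mulA hY psmx_mul1.
by rewrite e.
Qed.

Lemma unit_of_agree N n (g g' : ps n n) :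
  agree N (psmx_mul g g') (@psmx_id R n) -> co g 0 \in unitmx.
Proof.
move=> h; have : co (psmx_mul g g') 0 = co (@psmx_id R n) 0.
  by apply/matrixP => i j; rewrite !mxE h.
rewrite co_mul co_id big_ord1 subnn /= => /mulmx1_unit [] //.
Qed.

Lemma dvdXnP L (p : {poly C}) : reflect (forall i, (i < L)%N -> p`_i = 0) ('X^L %| p).
Proof.
apply: (iffP idP).
  rewrite dvdp_eq => /eqP -> i iL; by rewrite coefMXn iL.
move=> h; apply/dvdpP; exists (\poly_(i < size p) p`_(i + L)).
apply/polyP => i; rewrite coefMXn coef_poly.
case: ltnP => iL; first exact: h.
case: ltnP => hs; first by rewrite subnK.
by rewrite nth_default // (leq_trans hs (leq_subr _ _)).
Qed.

Lemma eqp_det l K (X Y : 'M[{poly C}]_K) : eqmod l X Y -> eqp l (\det X) (\det Y).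
Proof.
move=> h; rewrite /determinant; apply: eqp_sum => s _; apply: eqpM => //.
by apply: eqp_prod => i _; apply: h.
Qed.

Definition minor (K r s : nat) (A : 'M[{poly C}]_(r, s)) (f : 'I_K -> 'I_r)
  (g : 'I_K -> 'I_s) : 'M[{poly C}]_K := \matrix_(a, b) A (f a) (g b).

Lemma det_mul_rows K p r s (X : 'M[{poly C}]_(p, r)) (A : 'M_(r, s))
  (f : 'I_K -> 'I_p) (g : 'I_K -> 'I_s) :
  \det (minor (X *m A) f g) =
  \sum_(phi : {ffun 'I_K -> 'I_r}) (\prod_a X (f a) (phi a)) * \det (minor A phi g).
Proof.
rewrite /determinant.
rewrite (eq_bigr (fun sg : 'S_K => \sum_(phi : {ffun 'I_K -> 'I_r})
   (-1) ^+ sg * \prod_a (X (f a) (phi a) * A (phi a) (g (sg a))))); last first.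
  move=> sg _; rewrite -mulr_sumr; congr (_ * _).
  rewrite (eq_bigr (fun a => \sum_k X (f a) k * A k (g (sg a)))); last first.
    by move=> a _; rewrite !mxE.
  by rewrite bigA_distr_bigA.
rewrite exchange_big /=; apply: eq_bigr => phi _.
rewrite mulr_sumr; apply: eq_bigr => sg _.
by rewrite big_split /= mulrCA; congr (_ * (_ * _)); apply: eq_bigr => a _; rewrite mxE.
Qed.

Definition mlow (l K r s : nat) (A : 'M[{poly C}]_(r, s)) :=
  forall (f : 'I_K -> 'I_r) (g : 'I_K -> 'I_s), injective f -> injective g ->
  eqp l (\det (minor A f g)) 0.

Lemma mlow_mull l K p r s (X : 'M[{poly C}]_(p, r)) (A : 'M_(r, s)) :
  mlow l K A -> mlow l K (X *m A).
Proof.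
move=> hA f g fi gi; rewrite det_mul_rows.
apply: (@eqp_trans _ _ (\sum_(phi : {ffun 'I_K -> 'I_r}) (\prod_a X (f a) (phi a)) * 0)).
  apply: eqp_sum => phi _; apply: eqpM => //.
  case: (boolP (injectiveb phi)) => [/injectiveP pi | /injectivePn [a1 [a2 ne e]]].
    exact: hA.
  rewrite (determinant_alternate ne) // => b; by rewrite !mxE e.
by rewrite big1 // => phi _; rewrite mulr0.
Qed.

Lemma mlow_tr l K r s (A : 'M[{poly C}]_(r, s)) : mlow l K A -> mlow l K A^T.
Proof.
move=> hA f g fi gi.
have -> : minor A^T f g = (minor A g f)^T by apply/matrixP => a b; rewrite !mxE.
by rewrite det_tr; apply: hA.
Qed.

Lemma mlow_mulr l K r s q (A : 'M[{poly C}]_(r, s)) (Y : 'M_(s, q)) :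
  mlow l K A -> mlow l K (A *m Y).
Proof.
move=> hA; rewrite -[A *m Y]trmxK trmx_mul; apply: mlow_tr.
by apply: mlow_mull; apply: mlow_tr.
Qed.

Lemma mlow_eqmod l K r s (A B : 'M[{poly C}]_(r, s)) :
  eqmod l A B -> mlow l K A -> mlow l K B.
Proof.
move=> e hA f g fi gi; apply: eqp_trans (hA f g fi gi).
apply: eqp_det => a b; rewrite !mxE; apply: eqp_sym; apply: e.
Qed.

Lemma mlow_zero_rows l K r s (A : 'M[{poly C}]_(r, s)) (F : {set 'I_r}) :
  (#|F| < K)%N -> (forall i j, i \notin F -> A i j = 0) -> mlow l K A.
Proof.
move=> cF z f g fi gi.
have [a fa] : exists a, f a \notin F.
  apply/existsP; rewrite -negb_forall; apply/negP => /forallP hall.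
  have : f @: [set: 'I_K] \subset F by apply/subsetP => x /imsetP [a _ ->].
  move/subset_leq_card; rewrite card_imset // cardsT card_ord => hk.
  by move: (leq_ltn_trans hk cF); rewrite ltnn.
rewrite (expand_det_row _ a) big1 // => b _; by rewrite !mxE z // mul0r.
Qed.

End PartB.

Section PartD.
Variable R : realType.
Local Notation C := (complex R).
Local Notation ps m n := ('I_m -> 'I_n -> nat -> C).

Lemma jet_polymx_psi r s m (A : ps r s) : jet_polymx (@psi R r s m A) = PL m.+1 A.
Proof.
apply/matrixP => i j; rewrite !mxE; apply: eq_poly => q hq.
by rewrite /psi inordK.
Qed.

Lemma jet_in_D_iff r s n k (J : jetM R r s n) :
  jet_in_D k J <-> mlow n k.+1 (jet_polymx J).
Proof.
split.
  move=> h f g fi gi q hq; rewrite coef0.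
  by move/dvdXnP: (h f g fi gi) => /(_ q); apply.
move=> h f g fi gi; apply/dvdXnP => q hq.
by have := h f g fi gi q hq; rewrite coef0.
Qed.

Lemma arc_in_D_iff r s k (A : ps r s) :
  arc_in_D k A <-> forall m, mlow m k.+1 (PL m.+1 A).
Proof.
split=> h m.
  by have := h m; rewrite jet_in_D_iff jet_polymx_psi.
by rewrite jet_in_D_iff jet_polymx_psi.
Qed.

Lemma eqmod_PL_agree m r s (A B : ps r s) : agree m A B -> eqmod m (PL m.+1 A) (PL m.+1 B).
Proof. by move=> h i j q hq; rewrite !coef_PL ltnS hq h. Qed.

Lemma mlow_triple m K r r' s s' (X : ps r' r) (A : ps r s) (Y : ps s s') :
  mlow m K (PL m.+1 A) -> mlow m K (PL m.+1 (psmx_mul (psmx_mul X A) Y)).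
Proof.
move=> hA; apply: (@mlow_eqmod _ _ _ _ _ (PL m.+1 X *m PL m.+1 A *m PL m.+1 Y)).
  apply: eqmod_sym; apply: eqmod_trans (PL_mul _ _ (ltnSn m)) _.
  by apply: eqmod_mul (PL_mul _ _ (ltnSn m)) (eqmod_refl _).
by apply: mlow_mulr; apply: mlow_mull.
Qed.

Lemma arc_in_D_mul r r' s s' k (X : ps r' r) (A : ps r s) (Y : ps s s') :
  arc_in_D k A -> arc_in_D k (psmx_mul (psmx_mul X A) Y).
Proof. by move=> /arc_in_D_iff h; apply/arc_in_D_iff => m; apply: mlow_triple. Qed.

End PartD.

Section PartE.
Variable R : realType.
Local Notation C := (complex R).
Local Notation ps m n := ('I_m -> 'I_n -> nat -> C).

Lemma sum_tpow L mu (F : nat -> C) :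
  \sum_(a < L) tpow R (Some mu) a * F a = if (mu < L)%N then F mu else 0.
Proof.
case: ltnP => h.
  rewrite (bigD1 (Ordinal h)) //= eqxx mul1r big1 ?addr0 // => a ne.
  rewrite /tpow; case: eqP => [e|]; last by rewrite mul0r.
  by move: ne; rewrite -val_eqE /= e eqxx.
rewrite big1 // => a _; rewrite /tpow; case: eqP => [e|]; last by rewrite mul0r.
by move: (ltn_ord a); rewrite e ltnNge h.
Qed.

Lemma sum_tpow_rev l mu (F : nat -> C) :
  \sum_(a < l.+1) F a * tpow R (Some mu) (l - a) = if (mu <= l)%N then F (l - mu)%N else 0.
Proof.
case: leqP => h.
  have h' : (l - mu < l.+1)%N by rewrite ltnS leq_subr.
  rewrite (bigD1 (Ordinal h')) //= subKn // eqxx mulr1 big1 ?addr0 // => a ne.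
  rewrite /tpow; case: eqP => [e|]; last by rewrite mulr0.
  move: ne; rewrite -val_eqE /= -e subKn //; first by rewrite eqxx.
  by rewrite -ltnS.
rewrite big1 // => a _; rewrite /tpow; case: eqP => [e|]; last by rewrite mulr0.
by move: (leq_subr a l); rewrite e leqNgt h.
Qed.

Variables (r s : nat) (lam : 'I_r -> option nat).
Hypothesis hrs : (r <= s)%N.

Lemma col_lt (i : 'I_r) : (s - r + i < s)%N.
Proof. by rewrite -{2}(subnK hrs) ltn_add2l ltn_ord. Qed.

Definition col (i : 'I_r) : 'I_s := Ordinal (col_lt i).

Lemma col_inj : injective col.
Proof. by move=> i j /(congr1 val) /= /addnI /val_inj. Qed.

Local Notation del := (@delta R r s lam).

Lemma delE i j l : del i j l = if j == col i then tpow R (lam i) l else 0.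
Proof. by rewrite /delta -val_eqE. Qed.

Definition shiftd (lm : option nat) (F : nat -> C) (l : nat) : C :=
  if lm is Some mu then (if (mu <= l)%N then F (l - mu)%N else 0) else 0.

Lemma mul_delta_l q (Y : ps s q) i j l :
  psmx_mul del Y i j l = shiftd (lam i) (Y (col i) j) l.
Proof.
rewrite /psmx_mul (bigD1 (col i)) //= [Z in _ + Z]big1 ?addr0; last first.
  move=> k nk; apply: big1 => a _; by rewrite delE (negPf nk) mul0r.
rewrite (eq_bigr (fun a : 'I_l.+1 => tpow R (lam i) a * Y (col i) j (l - a)%N)); last first.
  by move=> a _; rewrite delE eqxx.
case: (lam i) => [mu|] /=; last by rewrite big1 // => a _; rewrite mul0r.
rewrite (sum_tpow _ _ (fun a => Y (col i) j (l - a)%N)) ltnS.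
by case: leqP.
Qed.

Lemma mul_delta_r q (X : ps q r) i k0 l :
  psmx_mul X del i (col k0) l = shiftd (lam k0) (X i k0) l.
Proof.
rewrite /psmx_mul (bigD1 k0) //= [Z in _ + Z]big1 ?addr0; last first.
  move=> k nk; apply: big1 => a _; rewrite delE.
  by rewrite (inj_eq col_inj) eq_sym (negPf nk) mulr0.
rewrite (eq_bigr (fun a : 'I_l.+1 => X i k0 a * tpow R (lam k0) (l - a))); last first.
  by move=> a _; rewrite delE eqxx.
case: (lam k0) => [mu|] /=; last by rewrite big1 // => a _; rewrite mulr0.
by rewrite (sum_tpow_rev _ _ (fun a => X i k0 a)).
Qed.

Lemma mul_delta_r0 q (X : ps q r) i b l :
  (forall k, b != col k) -> psmx_mul X del i b l = 0.
Proof.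
move=> nb; apply: big1 => k _; apply: big1 => a _.
by rewrite delE (negPf (nb k)) mulr0.
Qed.


Definition Fin := [set i | lam i != None].



Lemma poly_tpow m mu : (mu <= m)%N -> \poly_(l < m.+1) tpow R (Some mu) l = 'X^mu.
Proof.
move=> h; apply/polyP => q; rewrite coef_poly coefXn /tpow.
case: eqP => [->|ne]; first by rewrite ltnS h.
by case: ifP.
Qed.

Lemma minor_zero (A2 : ps r s) :
  arc_in_D #|Fin| A2 -> (forall i, i \in Fin -> forall j l, A2 i j l = del i j l) ->
  forall a b, a \notin Fin -> (forall i, i \in Fin -> b != col i) ->
  forall l, A2 a b l = 0.
Proof.
move=> D2 hfin a b ha hb l.
pose e := @enum_val _ (pred_of_set Fin).
have eF t : e t \in Fin by apply: enum_valP.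
pose mus t := odflt 0%N (lam (e t)).
pose M := (\sum_t mus t)%N.
pose m := (l + M)%N.
pose f x := if unlift ord0 x is Some t then e t else a.
pose g x := if unlift ord0 x is Some t then col (e t) else b.
have fi : injective f.
  move=> x y; rewrite /f.
  case: (unliftP ord0 x) => [tx ->|->]; case: (unliftP ord0 y) => [ty ->|->] //.
  - by move/enum_val_inj => ->.
  - by move=> ex; move: (eF tx); rewrite ex (negPf ha).
  - by move=> ex; move: (eF ty); rewrite -ex (negPf ha).
have gi : injective g.
  move=> x y; rewrite /g.
  case: (unliftP ord0 x) => [tx ->|->]; case: (unliftP ord0 y) => [ty ->|->] //.
  - by move/col_inj/enum_val_inj => ->.
  - by move=> ex; move: (hb _ (eF tx)); rewrite ex eqxx.
  - by move=> ex; move: (hb _ (eF ty)); rewrite -ex eqxx.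
have := (proj1 (arc_in_D_iff _ _) D2 m f g fi gi (l + M)%N (leqnn _)).
rewrite coef0.
set Mx := minor _ f g.
have hf0 : f ord0 = a by rewrite /f unlift_none.
have hg0 : g ord0 = b by rewrite /g unlift_none.
have hfl t : f (lift ord0 t) = e t by rewrite /f liftK.
have hgl t : g (lift ord0 t) = col (e t) by rewrite /g liftK.
have muM t : (mus t <= M)%N.
  by rewrite /M (bigD1 t) //= leq_addr.
have -> : \det Mx = PL m.+1 A2 a b * 'X^M.
  rewrite (expand_det_col Mx ord0) big_ord_recl [Z in _ + Z]big1 ?addr0; last first.
    move=> t _; rewrite !mxE hfl hg0.
    have -> : \poly_(l0 < m.+1) A2 (e t) b l0 = 0.
      apply/polyP => q; rewrite coef_poly coef0 hfin // delE.
      by rewrite (negPf (hb _ (eF t))); case: ifP.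
    by rewrite mul0r.
  rewrite /cofactor addn0 expr0 mul1r.
  have -> : row' ord0 (col' ord0 Mx) = diag_mx (\row_t 'X^(mus t)).
    apply/matrixP => t t'; rewrite !mxE hfl hgl.
    case: (t =P t') => [<-|nt].
      rewrite mulr1n.
      have -> : \poly_(l0 < m.+1) A2 (e t) (col (e t)) l0 =
                \poly_(l0 < m.+1) tpow R (Some (mus t)) l0.
        apply: eq_poly => q _; rewrite hfin // delE eqxx /mus.
        by move: (eF t); rewrite inE; case: (lam (e t)).
      by rewrite poly_tpow // /m (leq_trans (muM t)) // leq_addl.
    rewrite mulr0n; apply/polyP => q; rewrite coef_poly coef0 hfin // delE.
    rewrite (inj_eq col_inj) (inj_eq enum_val_inj).
    by rewrite eq_sym; case: eqP => // _; case: ifP.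
  rewrite det_diag.
  rewrite (eq_bigr (fun t => 'X^(mus t))); last by move=> t _; rewrite mxE.
  rewrite /M (big_morph (fun k : nat => ('X^k : {poly C})) (exprD 'X) (expr0 'X)).
  by rewrite !mxE hf0 hg0.
rewrite coefMXn ltnNge leq_addl /= addnK coef_PL ltnS /m leq_addr.
by [].
Qed.


Lemma row_mul N m q p (X X' : ps m q) (Y : ps q p) i :
  (forall j l, (l <= N)%N -> X i j l = X' i j l) ->
  forall j l, (l <= N)%N -> psmx_mul X Y i j l = psmx_mul X' Y i j l.
Proof.
move=> h j l hl; apply: eq_bigr => k _; apply: eq_bigr => a _.
by rewrite h // (leq_trans _ hl) // -ltnS.
Qed.

Variable n : nat.
Hypothesis hn : forall i mu, lam i = Some mu -> (mu <= n)%N.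

Lemma keyK (A : ps r s) (g g' : ps r r) (h h' : ps s s) :
  arc_in_D #|Fin| A ->
  agree n (psmx_mul g g') (@psmx_id R r) -> agree n (psmx_mul g' g) (@psmx_id R r) ->
  agree n (psmx_mul h h') (@psmx_id R s) -> agree n (psmx_mul h' h) (@psmx_id R s) ->
  agree n A (psmx_mul (psmx_mul g del) h') -> O_lam R s lam A.
Proof.
move=> hD gg1 gg2 hh1 hh2 hA.
have [Gi [gGi Gig]] := inv_exists (unit_of_agree gg1).
have [H [h'H Hh']] := inv_exists (unit_of_agree hh2).
pose A1 := psmx_mul (psmx_mul Gi A) H.
have eA : A = psmx_mul (psmx_mul g A1) h'.
  by rewrite /A1 !psmx_mulA Hh' psmx_mulr1 -psmx_mulA gGi psmx_mul1.
have a1 : agree n A1 del.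
  have := agree_mull H (agree_mulr Gi hA); rewrite -/A1 => h1.
  apply: agree_trans h1 _.
  by rewrite !psmx_mulA h'H psmx_mulr1 -psmx_mulA Gig psmx_mul1.
have D1 : arc_in_D #|Fin| A1 by apply: arc_in_D_mul.
pose H2 : ps s s := fun b j l =>
  if [pick i | (col i == b) && (lam i != None)] is Some i
  then A1 i j (l + odflt 0 (lam i))%N else @psmx_id R s b j l.
have H2col i mu : lam i = Some mu -> forall j l, H2 (col i) j l = A1 i j (l + mu)%N.
  move=> e j l; rewrite /H2; case: pickP => [i' /andP[/eqP /col_inj -> _]|/(_ i)].
    by rewrite e.
  by rewrite eqxx e.
have H2u : co H2 0 \in unitmx.
  have -> : co H2 0 = 1%:M; last by rewrite unitmx1.
  apply/matrixP => b j; rewrite !mxE /H2; case: pickP => [i /andP[/eqP <- ni]|np].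
    case e: (lam i) ni => [mu|] // _ /=.
    rewrite add0n a1 ?(hn e) // delE e /tpow eqxx eq_sym.
    by case: (col i == j).
  by rewrite /psmx_id andbT; case: (b == j).
have [H2i [H2H2i H2iH2]] := inv_exists H2u.
have dH2 i : i \in Fin -> forall j l, psmx_mul del H2 i j l = A1 i j l.
  rewrite inE; case e: (lam i) => [mu|] // _ j l; rewrite mul_delta_l e /=.
  case: leqP => hl; first by rewrite (H2col _ _ e) subnK.
  rewrite a1 ?(leq_trans (ltnW hl) (hn e)) // delE e /tpow.
  case: (j == col i) => //; case: eqP => // el; by rewrite el ltnn in hl.
pose A2 := psmx_mul A1 H2i.
have eA1 : A1 = psmx_mul A2 H2 by rewrite /A2 psmx_mulA H2iH2 psmx_mulr1.
have A2fin i : i \in Fin -> forall j l, A2 i j l = del i j l.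
  move=> hi j l; rewrite /A2 (@row_mul l _ _ _ _ (psmx_mul del H2)) //.
    by rewrite psmx_mulA H2H2i psmx_mulr1.
  by move=> j' l' _; rewrite dH2.
have A2nf i : i \notin Fin -> forall j l, (l <= n)%N -> A2 i j l = 0.
  move=> hi j l hl; rewrite /A2 (@row_mul n _ _ _ _ del) //.
    rewrite mul_delta_l; move: hi; rewrite inE negbK => /eqP -> //.
  by move=> j' l' hl'; rewrite a1.
have D2 : arc_in_D #|Fin| A2.
  have -> : A2 = psmx_mul (psmx_mul (@psmx_id R r) A1) H2i by rewrite psmx_mul1.
  exact: arc_in_D_mul.
have A2z := minor_zero D2 A2fin.
pose U : ps r r := fun a j l => @psmx_id R r a j l +
  (if (a \notin Fin) && (j \in Fin) then A2 a (col j) (l + odflt 0 (lam j))%N else 0).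
have Uu : co U 0 \in unitmx.
  have -> : co U 0 = 1%:M; last by rewrite unitmx1.
  apply/matrixP => a j; rewrite !mxE /U /psmx_id andbT.
  case: (boolP ((a \notin Fin) && (j \in Fin))) => [/andP[ha hj]|hnn].
    move: (hj); rewrite inE; case e: (lam j) => [mu|] // _ /=.
    by rewrite add0n A2nf ?(hn e) // addr0; case: (a == j).
  by rewrite addr0; case: (a == j).
have eA2 : A2 = psmx_mul U del.
  apply: functional_extensionality => a; apply: functional_extensionality => b.
  apply: functional_extensionality => l.
  case: (pickP (fun k => b == col k)) => [k0 /eqP -> | nb]; last first.
    rewrite mul_delta_r0; last by move=> k; rewrite nb.
    case: (boolP (a \in Fin)) => ha; first by rewrite A2fin // delE nb.
    by rewrite A2z // => i _; rewrite nb.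
  rewrite mul_delta_r.
  case e: (lam k0) => [mu|] /=; last first.
    have nk : forall i, i \in Fin -> i != k0.
      by move=> i; rewrite inE; apply: contraNneq => ->; rewrite e.
    case: (boolP (a \in Fin)) => ha.
      by rewrite A2fin // delE (inj_eq col_inj) eq_sym (negPf (nk _ ha)).
    by rewrite A2z // => i hi; rewrite (inj_eq col_inj) eq_sym nk.
  have k0F : k0 \in Fin by rewrite inE e.
  rewrite /U k0F andbT.
  case: (boolP (a \in Fin)) => ha /=.
    rewrite A2fin // delE (inj_eq col_inj) addr0.
    case: (k0 =P a) => [eka|nk].
      rewrite -eka e /tpow /psmx_id eqxx /=.
      case: leqP => hl.
        by rewrite subn_eq0 eqn_leq hl andbT.
      by case: eqP => // el; rewrite el ltnn in hl.
    case: leqP => _ //; rewrite /psmx_id.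
    by have -> : (a == k0) = false by apply/eqP => ea; apply: nk.
  have nk : (a == k0) = false by apply: contraNF ha => /eqP ->.
  rewrite /psmx_id nk /= add0r.
  case: leqP => hl; first by rewrite e /= subnK.
  by rewrite A2nf // (leq_trans (ltnW hl) (hn e)).
have [Ui [UUi UiU]] := inv_exists Uu.
exists (psmx_mul g U), (psmx_mul Ui Gi), (psmx_mul H H2i), (psmx_mul H2 h').
split; first by rewrite psmx_mulA -[psmx_mul U (psmx_mul Ui Gi)]psmx_mulA UUi psmx_mul1.
split; first by rewrite psmx_mulA -[psmx_mul Gi (psmx_mul g U)]psmx_mulA Gig psmx_mul1.
split; first by rewrite psmx_mulA -[psmx_mul H2i (psmx_mul H2 h')]psmx_mulA H2iH2 psmx_mul1.
split; first by rewrite psmx_mulA -[psmx_mul h' (psmx_mul H H2i)]psmx_mulA h'H psmx_mul1.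
rewrite eA eA1 eA2.
by rewrite !psmx_mulA.
Qed.

End PartE.

Section PartF.
Variable R : realType.
Local Notation C := (complex R).
Local Notation ps m n := ('I_m -> 'I_n -> nat -> C).
Local Notation tm := (GRing.term C).

Definition bigAdd (I : Type) (s : seq I) (F : I -> tm) : tm :=
  \big[GRing.Add/GRing.Const 0]_(x <- s) F x.

Lemma eval_bigAdd (e : seq C) (I : Type) (s : seq I) (F : I -> tm) :
  GRing.eval e (bigAdd s F) = \sum_(x <- s) GRing.eval e (F x).
Proof.
rewrite /bigAdd; apply: (big_rec2 (fun t v => GRing.eval e t = v)) => //.
by move=> x t v _ /= ->.
Qed.

Lemma rterm_bigAdd (I : Type) (s : seq I) (F : I -> tm) :
  (forall x, GRing.rterm (F x)) -> GRing.rterm (bigAdd s F).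
Proof.
move=> h; rewrite /bigAdd; apply: (big_rec (fun t => GRing.rterm t)) => //.
by move=> x t _ /= ->; rewrite h.
Qed.

Variable n : nat.

Definition mulT a b c (vX : 'I_a -> 'I_b -> 'I_n.+1 -> tm) (vY : 'I_b -> 'I_c -> 'I_n.+1 -> tm)
  (i : 'I_a) (j : 'I_c) (l : 'I_n.+1) : tm :=
  bigAdd (enum 'I_b) (fun k => bigAdd (enum 'I_l.+1) (fun t : 'I_l.+1 =>
     GRing.Mul (vX i k (inord t)) (vY k j (inord (l - t))))).

Lemma rterm_mulT a b c vX vY i j l :
  (forall i k m, GRing.rterm (vX i k m)) -> (forall k j m, GRing.rterm (vY k j m)) ->
  GRing.rterm (@mulT a b c vX vY i j l).
Proof.
move=> hX hY; apply: rterm_bigAdd => k; apply: rterm_bigAdd => t /=.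
by rewrite hX hY.
Qed.

Lemma eval_mulT (e : seq C) a b c vX vY (X : ps a b) (Y : ps b c) i j (l : 'I_n.+1) :
  (forall i k (m : 'I_n.+1), GRing.eval e (vX i k m) = X i k m) ->
  (forall k j (m : 'I_n.+1), GRing.eval e (vY k j m) = Y k j m) ->
  GRing.eval e (@mulT a b c vX vY i j l) = psmx_mul X Y i j l.
Proof.
move=> hX hY; rewrite /mulT eval_bigAdd /psmx_mul big_enum /=.
apply: eq_bigr => k _; rewrite eval_bigAdd big_enum /=; apply: eq_bigr => t _ /=.
have ht : (t <= n)%N by rewrite -ltnS (leq_trans (ltn_ord t)).
rewrite hX hY !inordK //; rewrite ltnS // (leq_trans (leq_subr _ _)) //.
by rewrite -ltnS.
Qed.


Variables (r s : nat) (lam : 'I_r -> option nat).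
Local Notation del := (@delta R r s lam).

Definition extJ (J : jetM R r s n) : ps r s :=
  fun i j l => if (l < n.+1)%N then J i j (inord l) else 0.

Definition S_sem (J : jetM R r s n) : Prop :=
  exists (g g' : ps r r) (h h' : ps s s),
    agree n (psmx_mul g g') (@psmx_id R r) /\ agree n (psmx_mul g' g) (@psmx_id R r) /\
    agree n (psmx_mul h h') (@psmx_id R s) /\ agree n (psmx_mul h' h) (@psmx_id R s) /\
    agree n (extJ J) (psmx_mul (psmx_mul g del) h').

Local Notation I3 a b := ('I_a * 'I_b * 'I_n.+1)%type.
Local Notation VV := ((I3 r r + I3 r r) + (I3 s s + I3 s s))%type.
Local Notation QQ := (VV + I3 r s)%type.
Definition NN := #|{: I3 r s}|.
Definition MM := #|{: VV}|.

Definition vv (v : VV) : tm := GRing.Var C (NN + enum_rank v)%N.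
Definition vg i j m := vv (inl (inl (i, j, m))).
Definition vg' i j m := vv (inl (inr (i, j, m))).
Definition vh i j m := vv (inr (inl (i, j, m))).
Definition vh' i j m := vv (inr (inr (i, j, m))).
Definition vJ (i : 'I_r) (j : 'I_s) (m : 'I_n.+1) : tm := GRing.Var C (enum_rank ((i, j, m) : I3 r s)).
Definition vD (k : 'I_r) (b : 'I_s) (m : 'I_n.+1) : tm := GRing.Const (del k b m).
Definition vI a (i j : 'I_a) (m : 'I_n.+1) : tm := GRing.Const (@psmx_id R a i j m).

Definition eqt (q : QQ) : tm :=
  match q with
  | inl (inl (inl (i, j, l))) => GRing.Add (mulT vg vg' i j l) (GRing.Opp (vI i j l))
  | inl (inl (inr (i, j, l))) => GRing.Add (mulT vg' vg i j l) (GRing.Opp (vI i j l))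
  | inl (inr (inl (i, j, l))) => GRing.Add (mulT vh vh' i j l) (GRing.Opp (vI i j l))
  | inl (inr (inr (i, j, l))) => GRing.Add (mulT vh' vh i j l) (GRing.Opp (vI i j l))
  | inr (i, j, l) => GRing.Add (vJ i j l) (GRing.Opp (mulT (mulT vg vD) vh' i j l))
  end.

Lemma rterm_eqt q : GRing.rterm (eqt q).
Proof.
by case: q => [[[[[i j] l]|[[i j] l]]|[[[i j] l]|[[i j] l]]]|[[i j] l]] /=;
  rewrite ?rterm_mulT //= => *; rewrite ?rterm_mulT.
Qed.

Definition arcv a (ys : seq C) (tag : I3 a a -> VV) : ps a a :=
  fun i j l => if (l < n.+1)%N then nth 0 ys (enum_rank (tag (i, j, inord l))) else 0.

Section Env.
Variables (x : 'I_NN -> C) (ys : seq C).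
Local Notation e := (envN x ++ ys).

Lemma eval_vv v : GRing.eval e (vv v) = nth 0 ys (enum_rank v).
Proof. by rewrite /= nth_cat size_envN ltnNge leq_addr /= addKn. Qed.

Lemma eval_vJ i j m : GRing.eval e (vJ i j m) = jet_coords x i j m.
Proof.
rewrite /= nth_cat size_envN ltn_ord nth_envN.
by rewrite (valK (enum_rank ((i, j, m) : I3 r s))).
Qed.

Lemma eval_tag a (tag : I3 a a -> VV) i k (m : 'I_n.+1) :
  GRing.eval e (vv (tag (i, k, m))) = arcv ys tag i k m.
Proof. by rewrite eval_vv /arcv ltn_ord inord_val. Qed.
End Env.

Definition tg : I3 r r -> VV := fun t => inl (inl t).
Definition tg' : I3 r r -> VV := fun t => inl (inr t).
Definition th : I3 s s -> VV := fun t => inr (inl t).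
Definition th' : I3 s s -> VV := fun t => inr (inr t).


Definition eqv (x : 'I_NN -> C) (ys : seq C) (q : QQ) : C :=
  match q with
  | inl (inl (inl (i, j, l))) => psmx_mul (arcv ys tg) (arcv ys tg') i j l - @psmx_id R r i j l
  | inl (inl (inr (i, j, l))) => psmx_mul (arcv ys tg') (arcv ys tg) i j l - @psmx_id R r i j l
  | inl (inr (inl (i, j, l))) => psmx_mul (arcv ys th) (arcv ys th') i j l - @psmx_id R s i j l
  | inl (inr (inr (i, j, l))) => psmx_mul (arcv ys th') (arcv ys th) i j l - @psmx_id R s i j l
  | inr (i, j, l) => jet_coords x i j l - psmx_mul (psmx_mul (arcv ys tg) del) (arcv ys th') i j l
  end.

Lemma eval_eqt x ys q : GRing.eval (envN x ++ ys) (eqt q) = eqv x ys q.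
Proof.
have ht a (tag : I3 a a -> VV) : forall i k (m : 'I_n.+1),
    GRing.eval (envN x ++ ys) (vv (tag (i, k, m))) = arcv ys tag i k m.
  by move=> i k m; apply: eval_tag.
case: q => [[[[[i j] l]|[[i j] l]]|[[[i j] l]|[[i j] l]]]|[[i j] l]] /=.
- by rewrite (eval_mulT (X := arcv ys tg) (Y := arcv ys tg')) //; move=> *; apply: ht.
- by rewrite (eval_mulT (X := arcv ys tg') (Y := arcv ys tg)) //; move=> *; apply: ht.
- by rewrite (eval_mulT (X := arcv ys th) (Y := arcv ys th')) //; move=> *; apply: ht.
- by rewrite (eval_mulT (X := arcv ys th') (Y := arcv ys th)) //; move=> *; apply: ht.
move: (eval_vJ x ys i j l) => /= ->.
rewrite (eval_mulT (X := psmx_mul (arcv ys tg) del) (Y := arcv ys th')) //.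
  move=> i' k m; rewrite (eval_mulT (X := arcv ys tg) (Y := del)) //.
  by move=> *; apply: ht.
by move=> *; apply: ht.
Qed.


Lemma agree_mul2 m p q (X X' : ps m p) (Y Y' : ps p q) :
  agree n X X' -> agree n Y Y' -> agree n (psmx_mul X Y) (psmx_mul X' Y').
Proof. by move=> h1 h2; apply: agree_trans (agree_mull _ h1) (agree_mulr _ h2). Qed.

Lemma S_sem_iff x : S_sem (jet_coords x) <-> exists ys, size ys = MM /\
  all (fun t => GRing.eval (envN x ++ ys) t == 0) [seq eqt q | q <- enum {: QQ}].
Proof.
have allE ys : all (fun t => GRing.eval (envN x ++ ys) t == 0) [seq eqt q | q <- enum {: QQ}]
    <-> forall q, eqv x ys q = 0.
  rewrite all_map; split => [/allP h q | h].
    by have /= := h q (mem_enum _ q); rewrite eval_eqt => /eqP.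
  by apply/allP => q _ /=; rewrite eval_eqt h.
have E0 (a b : C) : a - b = 0 -> a = b by move/eqP; rewrite subr_eq0 => /eqP.
split; last first.
  case=> ys [_ /allE h].
  exists (arcv ys tg), (arcv ys tg'), (arcv ys th), (arcv ys th').
  split.
    move=> i j l hl; have := h (inl (inl (inl (i, j, inord l)))).
    by rewrite /= inordK ?ltnS // => /E0.
  split.
    move=> i j l hl; have := h (inl (inl (inr (i, j, inord l)))).
    by rewrite /= inordK ?ltnS // => /E0.
  split.
    move=> i j l hl; have := h (inl (inr (inl (i, j, inord l)))).
    by rewrite /= inordK ?ltnS // => /E0.
  split.
    move=> i j l hl; have := h (inl (inr (inr (i, j, inord l)))).
    by rewrite /= inordK ?ltnS // => /E0.
  move=> i j l hl; have := h (inr (i, j, inord l)).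
  by rewrite /= inordK ?ltnS // /extJ ltnS hl => /E0.
case=> g [g' [h [h' [gg1 [gg2 [hh1 [hh2 hJ]]]]]]].
pose valv (v : VV) : C := match v with
  | inl (inl (i, j, m)) => g i j m | inl (inr (i, j, m)) => g' i j m
  | inr (inl (i, j, m)) => h i j m | inr (inr (i, j, m)) => h' i j m end.
pose ys := [seq valv v | v <- enum {: VV}].
have nthys v : nth 0 ys (enum_rank v) = valv v.
  by rewrite (nth_map v) ?nth_enum_rank // -cardE ltn_ord.
have ag a (tag : I3 a a -> VV) (X : ps a a) :
    (forall i j m, valv (tag (i, j, m)) = X i j m) -> agree n (arcv ys tag) X.
  by move=> hX i j l hl; rewrite /arcv ltnS hl nthys hX inordK // ltnS.
have agg : agree n (arcv ys tg) g by apply: ag.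
have agg' : agree n (arcv ys tg') g' by apply: ag.
have agh : agree n (arcv ys th) h by apply: ag.
have agh' : agree n (arcv ys th') h' by apply: ag.
exists ys; split; first by rewrite size_map -cardE.
apply/allE => -[[[[[i j] l]|[[i j] l]]|[[[i j] l]|[[i j] l]]]|[[i j] l]] /=;
  have hl : (l <= n)%N by rewrite -ltnS ltn_ord.
- by rewrite (agree_mul2 agg agg') // gg1 // subrr.
- by rewrite (agree_mul2 agg' agg) // gg2 // subrr.
- by rewrite (agree_mul2 agh agh') // hh1 // subrr.
- by rewrite (agree_mul2 agh' agh) // hh2 // subrr.
rewrite (agree_mul2 (agree_mul2 agg (@agree_refl R n r s del)) agh') // -hJ //.
by rewrite /extJ ltn_ord inord_val subrr.
Qed.

Lemma S_sem_constructible : constructible_jet S_sem.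
Proof.
rewrite /constructible_jet.
apply: (@constructible_ext R NN (fun x => exists ys, size ys = MM /\
  all (fun t => GRing.eval (envN x ++ ys) t == 0) [seq eqt q | q <- enum {: QQ}])).
  by move=> x; rewrite S_sem_iff.
apply: proj_constructible; rewrite all_map; apply/allP => q _ /=.
exact: rterm_eqt.
Qed.

End PartF.

Section PartG.
Variable R : realType.
Local Notation C := (complex R).
Local Notation ps m n := ('I_m -> 'I_n -> nat -> C).
Variables (r s : nat) (lam : 'I_r -> option nat).
Hypothesis hrs : (r <= s)%N.
Local Notation del := (@delta R r s lam).
Let n := (\max_(i < r) odflt 0 (lam i))%N.
Lemma hn i mu : lam i = Some mu -> (mu <= n)%N.
Proof. by move=> e; have := @leq_bigmax _ (fun i => odflt 0%N (lam i)) i; rewrite e. Qed.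

Local Notation Sn := (@S_sem R n r s lam).

Lemma F1 (A : ps r s) : agree n (extJ (@psi R r s n A)) A.
Proof. by move=> i j l hl; rewrite /extJ ltnS hl /psi inordK // ltnS. Qed.

Lemma F2 (A : ps r s) : O_lam R s lam A -> Sn (@psi R r s n A).
Proof.
case=> g [g' [h [h' [e1 [e2 [e3 [e4 eA]]]]]]].
exists g, g', h, h'; rewrite e1 e2 e3 e4 -eA.
by do 4! split => //; apply: F1.
Qed.

Lemma F3 (A : ps r s) : Sn (@psi R r s n A) -> arc_in_D #|Fin lam| A -> O_lam R s lam A.
Proof.
case=> g [g' [h [h' [e1 [e2 [e3 [e4 eA]]]]]]] hD.
apply: (keyK hrs hn hD e1 e2 e3 e4).
exact: agree_trans (agree_sym (F1 A)) eA.
Qed.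

Lemma mlow_del m : mlow m #|Fin lam|.+1 (PL m.+1 del).
Proof.
apply: (@mlow_zero_rows R m #|Fin lam|.+1 r s (PL m.+1 del) (Fin lam)) => // i j.
rewrite inE negbK => /eqP e.
rewrite mxE; apply/polyP => q; rewrite coef_poly coef0 /delta /tpow e.
by case: ifP => // _; case: ifP.
Qed.

Lemma F4 (J : jetM R r s n) : Sn J -> jet_in_D #|Fin lam| J.
Proof.
case=> g [g' [h [h' [e1 [e2 [e3 [e4 eA]]]]]]].
apply/jet_in_D_iff.
have -> : jet_polymx J = PL n.+1 (extJ J).
  apply/matrixP => i j; rewrite !mxE; apply: eq_poly => q hq.
  by rewrite /extJ hq.
apply: mlow_eqmod (eqmod_sym (eqmod_PL_agree eA)) _.
exact: (mlow_triple g h' (@mlow_del n)).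
Qed.

Lemma F5 (A : ps r s) : O_lam R s lam A -> arc_in_D #|Fin lam| A.
Proof.
case=> g [g' [h [h' [e1 [e2 [e3 [e4 ->]]]]]]].
apply: arc_in_D_mul; apply/arc_in_D_iff => m; exact: (@mlow_del m).
Qed.

Lemma arc_in_D_big k (A : ps r s) : (r <= k)%N -> arc_in_D k A.
Proof.
move=> hk m f g fi gi; exfalso.
by have := leq_card f fi; rewrite !card_ord ltnNge (leq_trans hk).
Qed.

End PartG.


End Helpers.
Import Helpers.

Theorem proposition3p4 (R : realType) (r s : nat) (lam : 'I_r -> option nat) :
  (r <= s)%N -> prepartition lam ->
  (is_partition lam -> cylinder_M (O_lam R s lam)) /\
  (forall k : nat, (k <= r)%N ->
     #|[pred i | lam i == None]| = (r - k)%N ->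
     cylinder_D k (O_lam R s lam)).
Proof.
move=> hrs _.
set n := (\max_(i < r) odflt 0 (lam i))%N.
split.
  move=> hpart; exists n, (@S_sem R n r s lam); split.
    exact: S_sem_constructible.
  move=> A; split; first exact: F2.
  move=> hS; apply: F3 => //; apply: arc_in_D_big.
  rewrite -[X in (X <= _)%N]card_ord; apply: subset_leq_card; apply/subsetP => i _.
  by rewrite inE; apply/eqP; apply: hpart.
move=> k hk hc.
have hF : #|Fin lam| = k.
  have := cardC [pred i | lam i == None]; rewrite hc card_ord => e.
  have -> : #|Fin lam| = #|[predC [pred i | lam i == None]]|.
    by apply: eq_card => i; rewrite !inE.
  by apply/eqP; rewrite -(eqn_add2l (r - k)) e subnK.
exists n, (@S_sem R n r s lam); split; first exact: S_sem_constructible.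
split; first by move=> J hJ; rewrite -hF; apply: F4.
move=> A; split.
  by move=> hA; rewrite -hF; split; [apply: F5 | apply: F2].
by case=> hD hS; apply: F3 => //; rewrite hF.
Qed.
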